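(* Let $\mathcal C=(C_v)_{v\in V}$ be a univalent circle packing in $S^2$ indexed by a finite set $V$, and let $\mathcal V_{\mathcal C}=\{U\subset V:\bigcap_{v\in U}C_v\neq\emptyset\}$. Let $\varepsilon\in(0,1)$. Then there exists $\delta\in(0,1)$ such that for every $\alpha\in\mathbb R^3$ with $1-\delta<|\alpha|<1$ we have \[V\setminus V_\alpha^1\in\mathcal V_{\mathcal C},\qquad\text{where } V_\alpha^1=\{v\in V: f_\alpha(C_v)\subset B_\varepsilon(\alpha/|\alpha|)\}.\]
   Context: $S^2$ is the unit sphere in $\mathbb R^3$; $B_\varepsilon(x)$ is the open Euclidean ball of radius $\varepsilon$ about $x$. A spherical cap is a connected closed subset of $S^2$ whose boundary in $S^2$ is a circle obtained as the intersection of $S^2$ with an affine plane (neither empty nor a point); a circle packing is a family of spherical caps, univalent if their interiors are mutually disjoint. For $\beta\in S^2$ let $H_\beta=\{y:\langle y-\beta,\beta\rangle=0\}$, $\pi_\beta:H_\beta\cup\{\infty\}\to S^2$ the stereographic projection $\pi_\beta(y)=\frac{4}{|\beta+y|^2}(\beta+y)-\beta$, $\pi_\beta(\infty)=-\beta$; for $\lambda>0$ let $D^\lambda_\beta(y)=\beta+\lambda(y-\beta)$, $D^\lambda_\beta(\infty)=\infty$, and $g^\lambda_\beta=\pi_\beta^{-1}\circ D^\lambda_\beta\circ\pi_\beta:S^2\to S^2$. For $\alpha$ in the open unit ball define $f_\alpha=g^{1-|\alpha|}_{\alpha/|\alpha|}$ if $\alpha\neq0$ and $f_0=\mathrm{Id}_{S^2}$.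 *)

(* Defs.v *)
From Stdlib Require Import Reals Lra FinFun.
Open Scope R_scope.

Definition R3 : Type := (R * R * R)%type.

Definition vadd (x y : R3) : R3 :=
  let '(x1, x2, x3) := x in let '(y1, y2, y3) := y in (x1 + y1, x2 + y2, x3 + y3).
Definition vscal (a : R) (x : R3) : R3 :=
  let '(x1, x2, x3) := x in (a * x1, a * x2, a * x3).
Definition vopp (x : R3) : R3 := vscal (-1) x.
Definition vsub (x y : R3) : R3 := vadd x (vopp y).
Definition dot (x y : R3) : R :=
  let '(x1, x2, x3) := x in let '(y1, y2, y3) := y in x1 * y1 + x2 * y2 + x3 * y3.
Definition vnorm (x : R3) : R := sqrt (dot x x).
Definition dist3 (x y : R3) : R := vnorm (vsub x y).
Definition vzero : R3 := (0, 0, 0).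

Definition vec_eq_dec (x y : R3) : {x = y} + {x <> y}.
Proof.
  destruct x as [[x1 x2] x3], y as [[y1 y2] y3].
  destruct (Req_EM_T x1 y1); [|right; congruence].
  destruct (Req_EM_T x2 y2); [|right; congruence].
  destruct (Req_EM_T x3 y3); [|right; congruence].
  left; subst; reflexivity.
Defined.

Definition S2 (x : R3) : Prop := vnorm x = 1.
Definition ball3 (x : R3) (eps : R) (y : R3) : Prop := dist3 y x < eps.

Definition subset3 (A B : R3 -> Prop) : Prop := forall x, A x -> B x.

Definition open3 (U : R3 -> Prop) : Prop :=
  forall x, U x -> exists r, 0 < r /\ subset3 (ball3 x r) U.
Definition closed3 (A : R3 -> Prop) : Prop :=
  forall x, (forall r, 0 < r -> exists y, A y /\ ball3 x r y) -> A x.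
Definition connected3 (A : R3 -> Prop) : Prop :=
  ~ (exists U W : R3 -> Prop, open3 U /\ open3 W /\
       (forall x, A x -> U x \/ W x) /\
       (exists x, A x /\ U x) /\ (exists x, A x /\ W x) /\
       (forall x, ~ (A x /\ U x /\ W x))).

(* boundary and interior relative to S^2 *)
Definition boundary_S2 (A : R3 -> Prop) (x : R3) : Prop :=
  S2 x /\ forall r, 0 < r ->
    (exists y, A y /\ ball3 x r y) /\ (exists y, S2 y /\ ~ A y /\ ball3 x r y).
Definition interior_S2 (A : R3 -> Prop) (x : R3) : Prop :=
  A x /\ exists r, 0 < r /\ forall y, S2 y -> ball3 x r y -> A y.

Definition is_circle (K : R3 -> Prop) : Prop :=
  exists (n : R3) (c : R), n <> vzero /\
    (forall x, K x <-> (S2 x /\ dot n x = c)) /\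
    (exists x y, K x /\ K y /\ x <> y).

Definition spherical_cap (C : R3 -> Prop) : Prop :=
  subset3 C S2 /\ connected3 C /\ closed3 C /\ is_circle (boundary_S2 C).

Definition univalent_packing {V : Type} (C : V -> R3 -> Prop) : Prop :=
  (forall v, spherical_cap (C v)) /\
  (forall v w, v <> w -> forall x, ~ (interior_S2 (C v) x /\ interior_S2 (C w) x)).

Definition in_VC {V : Type} (C : V -> R3 -> Prop) (U : V -> Prop) : Prop :=
  exists x, S2 x /\ forall v, U v -> C v x.

Definition H (beta y : R3) : Prop := dot (vsub y beta) beta = 0.

(* stereographic projection pi_beta : H_beta u {oo} -> S^2 ; None = oo *)
Definition pi (beta : R3) (y : option R3) : R3 :=
  match y with
  | Some y => vsub (vscal (4 / dot (vadd beta y) (vadd beta y)) (vadd beta y)) beta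
  | None => vopp beta
  end.

Definition pi_inv (beta : R3) (x : R3) : option R3 :=
  if vec_eq_dec x (vopp beta) then None
  else Some (vsub (vscal (4 / dot (vadd x beta) (vadd x beta)) (vadd x beta)) beta).

Definition Dil (beta : R3) (lam : R) (y : option R3) : option R3 :=
  match y with
  | Some y => Some (vadd beta (vscal lam (vsub y beta)))
  | None => None
  end.

Definition g (beta : R3) (lam : R) (x : R3) : R3 := pi beta (Dil beta lam (pi_inv beta x)).

Definition f (alpha : R3) (x : R3) : R3 :=
  if vec_eq_dec alpha vzero then x
  else g (vscal (/ vnorm alpha) alpha) (1 - vnorm alpha) x.

Definition V1 {V : Type} (C : V -> R3 -> Prop) (eps : R) (alpha : R3) (v : V) : Prop :=
  forall x, C v x -> ball3 (vscal (/ vnorm alpha) alpha) eps (f alpha x).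

(* Main.v *)
Require Import Defs.
From Stdlib Require Import Reals FinFun.
From Stdlib Require Import Lra Lia List Classical IndefiniteDescription.
From HB Require Import structures.
From mathcomp Require all_boot all_order all_algebra.
From mathcomp Require all_classical all_reals all_analysis.
From mathcomp Require Rstruct Rstruct_topology.
Module Bridge.
Import all_boot all_order all_algebra.
Import all_classical all_reals all_analysis.
Import Rstruct Rstruct_topology.
Import Order.TTheory GRing.Theory Num.Theory.
Local Open Scope ring_scope.

Lemma BW (u : nat -> R) (M : R) : (forall n, Rle (Rabs (u n)) M) ->
  exists phi : nat -> nat, (forall n, (phi n < phi (S n))%coq_nat) /\
    exists l, Un_cv (fun n => u (phi n)) l.
Proof.
move=> Hu.
have bnd : bounded_fun (u : nat -> R^o).
  exists M; split; first by rewrite num_real.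
  move=> y My x _ /=; apply: le_trans (ltW My).
  by apply/RleP; exact: (Hu x).
have [phi phiinc phicv] := bolzano_weierstrass bnd.
exists phi; split.
  move=> n; apply/ssrnat.ltP; have := leW_mono phiinc n n.+1; move=> h; exact: (etrans h (ltnSn n)).
exists (limn (u \o phi)).
move=> e /RltP e0.
have /cvgrPdist_lt /(_ e e0) := phicv.
case=> N _ HN.
exists N => n /ssrnat.leP nN.
rewrite /R_dist; apply/RltP.
by have := HN n nN; rewrite /= distrC.
Qed.
End Bridge.

Set Bullet Behavior "Strict Subproofs".
Open Scope R_scope.

Definition BW := Bridge.BW.

Lemma dist3_coord a1 a2 a3 b1 b2 b3 :
  dist3 (a1,a2,a3) (b1,b2,b3) = sqrt ((a1-b1)^2+(a2-b2)^2+(a3-b3)^2).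
Proof. unfold dist3, vnorm, vsub, vopp, vadd, vscal, dot; cbn. f_equal; ring. Qed.

Lemma norm_tri a1 a2 a3 c1 c2 c3 :
  sqrt ((a1+c1)^2+(a2+c2)^2+(a3+c3)^2) <=
  sqrt (a1^2+a2^2+a3^2) + sqrt (c1^2+c2^2+c3^2).
Proof.
  set (A := a1^2+a2^2+a3^2). set (Cc := c1^2+c2^2+c3^2).
  assert (HA : 0 <= A) by (unfold A; nra).
  assert (HC : 0 <= Cc) by (unfold Cc; nra).
  pose proof (sqrt_pos A) as sA. pose proof (sqrt_pos Cc) as sC.
  pose proof (sqrt_sqrt A HA) as eA. pose proof (sqrt_sqrt Cc HC) as eC.
  rewrite <- (sqrt_pow2 (sqrt A + sqrt Cc)) by lra.
  apply sqrt_le_1_alt.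
  assert (CS : (a1*c1+a2*c2+a3*c3)^2 <= A*Cc).
  { assert (L : A*Cc - (a1*c1+a2*c2+a3*c3)^2 = (a1*c2-a2*c1)^2+(a1*c3-a3*c1)^2+(a2*c3-a3*c2)^2)
      by (unfold A, Cc; ring).
    pose proof (pow2_ge_0 (a1*c2-a2*c1)). pose proof (pow2_ge_0 (a1*c3-a3*c1)).
    pose proof (pow2_ge_0 (a2*c3-a3*c2)). lra. }
  assert (CS2 : a1*c1+a2*c2+a3*c3 <= sqrt A * sqrt Cc).
  { assert (Hp: 0 <= sqrt A * sqrt Cc) by nra.
    assert (Hq: (sqrt A * sqrt Cc)^2 = A*Cc) by nra.
    set (p := a1*c1+a2*c2+a3*c3) in *. set (q := sqrt A * sqrt Cc) in *.
    rewrite <- Hq in CS. clearbody p q. nra. }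
  unfold A, Cc in *. nra.
Qed.

Lemma dist3_tri x y z : dist3 x z <= dist3 x y + dist3 y z.
Proof.
  destruct x as [[x1 x2] x3], y as [[y1 y2] y3], z as [[z1 z2] z3].
  rewrite !dist3_coord.
  replace (x1 - z1) with ((x1-y1)+(y1-z1)) by ring.
  replace (x2 - z2) with ((x2-y2)+(y2-z2)) by ring.
  replace (x3 - z3) with ((x3-y3)+(y3-z3)) by ring.
  apply norm_tri.
Qed.

Lemma dist3_sym x y : dist3 x y = dist3 y x.
Proof.
  destruct x as [[x1 x2] x3], y as [[y1 y2] y3]. rewrite !dist3_coord. f_equal; ring.
Qed.

Lemma dist3_self x : dist3 x x = 0.
Proof.
  destruct x as [[x1 x2] x3]. rewrite dist3_coord.
  replace ((x1 - x1) ^ 2 + (x2 - x2) ^ 2 + (x3 - x3) ^ 2) with 0 by ring. apply sqrt_0.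
Qed.

Lemma dist3_small a1 a2 a3 b1 b2 b3 r : 0 < r ->
  Rabs (a1 - b1) < r/3 -> Rabs (a2 - b2) < r/3 -> Rabs (a3 - b3) < r/3 ->
  dist3 (a1,a2,a3) (b1,b2,b3) < r.
Proof.
  intros Hr H1 H2 H3. rewrite dist3_coord.
  rewrite <- (sqrt_pow2 r) by lra. apply sqrt_lt_1_alt. split.
  - pose proof (pow2_ge_0 (a1-b1)). pose proof (pow2_ge_0 (a2-b2)). pose proof (pow2_ge_0 (a3-b3)). lra.
  - pose proof (Rabs_pos (a1-b1)). pose proof (Rabs_pos (a2-b2)). pose proof (Rabs_pos (a3-b3)).
    rewrite <- (pow2_abs (a1-b1)), <- (pow2_abs (a2-b2)), <- (pow2_abs (a3-b3)).
    nra.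
Qed.

Lemma S2_coord x1 x2 x3 : S2 (x1,x2,x3) -> x1*x1+x2*x2+x3*x3 = 1.
Proof.
  unfold S2, vnorm, dot; cbn. intro H.
  assert (0 <= x1*x1+x2*x2+x3*x3) by nra.
  rewrite <- (sqrt_sqrt _ H0), H. ring.
Qed.

Lemma S2_bound x1 x2 x3 : S2 (x1,x2,x3) -> Rabs x1 <= 1 /\ Rabs x2 <= 1 /\ Rabs x3 <= 1.
Proof.
  intro H; apply S2_coord in H.
  split; [|split]; apply Rabs_le; split; nra.
Qed.

Definition Pp {V : Type} (C : V -> R3 -> Prop) (U : V -> Prop) (eta : R) : Prop :=
  forall p, (forall v, U v -> exists x, C v x /\ dist3 x p < eta) ->
    exists x, S2 x /\ forall v, U v -> C v x.

Lemma incr_ge (phi : nat -> nat) : (forall n, (phi n < phi (S n))%nat) -> forall n, (n <= phi n)%nat.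
Proof. intros H n; induction n; [lia|]. specialize (H n); lia. Qed.

Lemma incr_mono (phi : nat -> nat) : (forall n, (phi n < phi (S n))%nat) ->
  forall n m, (n <= m)%nat -> (phi n <= phi m)%nat.
Proof. intros H n m Hnm; induction Hnm; [lia|]. specialize (H m); lia. Qed.

Lemma incr_comp (phi psi : nat -> nat) : (forall n, (phi n < phi (S n))%nat) ->
  (forall n, (psi n < psi (S n))%nat) -> forall n, (phi (psi n) < phi (psi (S n)))%nat.
Proof.
  intros H1 H2 n. specialize (H2 n).
  assert (Hm := incr_mono phi H1 (S (psi n)) (psi (S n)) H2). specialize (H1 (psi n)). lia.
Qed.

Lemma sub_cv (u : nat -> R) l (phi : nat -> nat) : Un_cv u l ->
  (forall n, (phi n < phi (S n))%nat) -> Un_cv (fun n => u (phi n)) l.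
Proof.
  intros H Hp e He. destruct (H e He) as [N HN]. exists N. intros n Hn. apply HN.
  pose proof (incr_ge phi Hp n). lia.
Qed.

Lemma S2_e1 : S2 (1,0,0).
Proof. unfold S2, vnorm, dot; cbn. replace (1*1+0*0+0*0) with 1 by ring. apply sqrt_1. Qed.

Lemma archi2 r : 0 < r -> exists N : nat, 2 * / (INR N + 1) < r.
Proof.
  intros Hr. destruct (INR_unbounded (2/r)) as [N HN]. exists N.
  pose proof (pos_INR N).
  apply (Rmult_lt_reg_r (INR N + 1)); [lra|].
  replace (2 * / (INR N + 1) * (INR N + 1)) with 2 by (field; lra).
  assert (2 < r * INR N).
  { apply (Rmult_lt_reg_l (/r)). apply Rinv_0_lt_compat; lra.
    replace (/ r * (r * INR N)) with (INR N) by (field; lra). unfold Rdiv in HN. lra. }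
  nra.
Qed.

Lemma stepA {V : Type} (C : V -> R3 -> Prop) :
  (forall v, subset3 (C v) S2) -> (forall v, closed3 (C v)) ->
  forall U : V -> Prop, exists eta, 0 < eta /\ Pp C U eta.
Proof.
  intros Hsub Hcl U.
  destruct (classic (exists x, S2 x /\ forall v, U v -> C v x)) as [Hex|Hno].
  { exists 1. split; [lra|]. intros p _. exact Hex. }
  destruct (classic (exists v0, U v0)) as [[v0 Hv0]|Hnv].
  2:{ exfalso. apply Hno. exists (1,0,0). split; [exact S2_e1|]. intros v Hv. exfalso; eauto. }
  apply NNPP. intro Hnot.
  assert (Hn : forall n : nat, exists q, C v0 q /\
            forall v, U v -> exists x, C v x /\ dist3 x q < 2 * / (INR n + 1)).
  { intro n.
    assert (Hpos : 0 < / (INR n + 1)) by (apply Rinv_0_lt_compat; pose proof (pos_INR n); lra).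
    assert (HnP : ~ Pp C U (/ (INR n + 1))) by (intro HP; apply Hnot; eauto).
    unfold Pp in HnP. apply not_all_ex_not in HnP. destruct HnP as [p Hp].
    apply imply_to_and in Hp. destruct Hp as [Hp _].
    destruct (Hp v0 Hv0) as [q [Hq Hqp]].
    exists q. split; [exact Hq|]. intros v Hv.
    destruct (Hp v Hv) as [x [Hx Hxp]]. exists x. split; [exact Hx|].
    pose proof (dist3_tri x p q). rewrite (dist3_sym p q) in H. lra. }
  apply functional_choice in Hn. destruct Hn as [q Hq].
  set (q1 := fun n => fst (fst (q n))).
  set (q2 := fun n => snd (fst (q n))).
  set (q3 := fun n => snd (q n)).
  assert (Hqe : forall n, q n = (q1 n, q2 n, q3 n)).
  { intro n. unfold q1, q2, q3. destruct (q n) as [[? ?] ?]. reflexivity. }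
  assert (Hbd : forall n, Rabs (q1 n) <= 1 /\ Rabs (q2 n) <= 1 /\ Rabs (q3 n) <= 1).
  { intro n. apply S2_bound. rewrite <- Hqe. apply (Hsub v0). apply Hq. }
  destruct (BW q1 1 (fun n => proj1 (Hbd n))) as [phi1 [Hi1 [l1 Hl1]]].
  destruct (BW (fun n => q2 (phi1 n)) 1 (fun n => proj1 (proj2 (Hbd (phi1 n))))) as [phi2 [Hi2 [l2 Hl2]]].
  destruct (BW (fun n => q3 (phi1 (phi2 n))) 1 (fun n => proj2 (proj2 (Hbd (phi1 (phi2 n)))))) as [phi3 [Hi3 [l3 Hl3]]].
  set (psi := fun n => phi1 (phi2 (phi3 n))).
  assert (Hi23 : forall n, (phi2 (phi3 n) < phi2 (phi3 (S n)))%nat) by (apply incr_comp; auto).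
  assert (Hpsi : forall n, (psi n < psi (S n))%nat) by (unfold psi; apply incr_comp; auto).
  assert (C1 : Un_cv (fun n => q1 (psi n)) l1) by (apply (sub_cv (fun n => q1 (phi1 n)) l1 (fun n => phi2 (phi3 n))); auto).
  assert (C2 : Un_cv (fun n => q2 (psi n)) l2) by (apply (sub_cv (fun n => q2 (phi1 (phi2 n))) l2 phi3); auto).
  assert (C3 : Un_cv (fun n => q3 (psi n)) l3) by exact Hl3.
  set (Q := (l1, l2, l3)).
  assert (HQ : forall v, U v -> C v Q).
  { intros v Hv. apply (Hcl v). intros r Hr.
    destruct (C1 (r/6)) as [N1 HN1]; [lra|].
    destruct (C2 (r/6)) as [N2 HN2]; [lra|].
    destruct (C3 (r/6)) as [N3 HN3]; [lra|].
    destruct (archi2 (r/2)) as [N4 HN4]; [lra|].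
    set (n := (N1 + N2 + N3 + N4)%nat).
    assert (Hd : dist3 (q (psi n)) Q < r/2).
    { rewrite Hqe. unfold Q. apply dist3_small; [lra| | |].
      - assert (HH := HN1 n ltac:(unfold n; lia)). unfold R_dist in HH. lra.
      - assert (HH := HN2 n ltac:(unfold n; lia)). unfold R_dist in HH. lra.
      - assert (HH := HN3 n ltac:(unfold n; lia)). unfold R_dist in HH. lra. }
    destruct (proj2 (Hq (psi n)) v Hv) as [x [Hx Hxq]].
    exists x. split; [exact Hx|]. unfold ball3.
    assert (Hle : 2 * / (INR (psi n) + 1) <= 2 * / (INR N4 + 1)).
    { apply Rmult_le_compat_l; [lra|]. apply Rinv_le_contravar.
      - pose proof (pos_INR N4); lra.
      - apply Rplus_le_compat_r. apply le_INR. pose proof (incr_ge psi Hpsi n). unfold n in *. lia. }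
    pose proof (dist3_tri x (q (psi n)) Q). lra. }
  apply Hno. exists Q. split.
  - apply (Hsub v0). apply HQ. exact Hv0.
  - exact HQ.
Qed.

Lemma w_facts b1 b2 b3 x1 x2 x3 D w1 w2 w3 :
  b1*b1+b2*b2+b3*b3 = 1 -> x1*x1+x2*x2+x3*x3 = 1 ->
  D = (x1 + b1) * (x1 + b1) + (x2 + b2) * (x2 + b2) + (x3 + b3) * (x3 + b3) -> 0 < D ->
  w1 = 4 / D * (x1 + b1) + -1 * b1 + -1 * b1 ->
  w2 = 4 / D * (x2 + b2) + -1 * b2 + -1 * b2 ->
  w3 = 4 / D * (x3 + b3) + -1 * b3 + -1 * b3 ->
  b1*w1+b2*w2+b3*w3 = 0 /\ w1*w1+w2*w2+w3*w3 = 16/D - 4.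
Proof.
  intros Hb Hx HD HD0 H1 H2 H3.
  set (k := 4/D) in *.
  assert (Hk : k * D = 4) by (unfold k; field; lra).
  assert (Hk16 : 16 / D = 4 * k) by (unfold k; field; lra).
  rewrite Hk16. clearbody k. subst w1 w2 w3.
  assert (HD' : D = 2 + 2*(x1*b1+x2*b2+x3*b3)) by (rewrite HD; nra).
  assert (E1 : k*(x1*b1+x2*b2+x3*b3) = 2 - k) by nra.
  assert (E2 : k*(b1*b1+b2*b2+b3*b3) = k) by (rewrite Hb; ring).
  assert (E3 : k*k*D = 4*k) by (rewrite Rmult_assoc, Hk; ring).
  split.
  - replace (b1 * (k * (x1 + b1) + -1 * b1 + -1 * b1) + b2 * (k * (x2 + b2) + -1 * b2 + -1 * b2) +
             b3 * (k * (x3 + b3) + -1 * b3 + -1 * b3))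
      with (k*(x1*b1+x2*b2+x3*b3) + k*(b1*b1+b2*b2+b3*b3) - 2*(b1*b1+b2*b2+b3*b3)) by ring.
    rewrite E1, E2, Hb. ring.
  - replace ((k * (x1 + b1) + -1 * b1 + -1 * b1) * (k * (x1 + b1) + -1 * b1 + -1 * b1) +
             (k * (x2 + b2) + -1 * b2 + -1 * b2) * (k * (x2 + b2) + -1 * b2 + -1 * b2) +
             (k * (x3 + b3) + -1 * b3 + -1 * b3) * (k * (x3 + b3) + -1 * b3 + -1 * b3))
      with (k*k*D - 4*(k*(x1*b1+x2*b2+x3*b3) + k*(b1*b1+b2*b2+b3*b3)) + 4*(b1*b1+b2*b2+b3*b3))
      by (rewrite HD; ring).
    rewrite E1, E2, E3, Hb. ring.
Qed.

Lemma a_facts b1 b2 b3 w1 w2 w3 lam :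
  b1*b1+b2*b2+b3*b3 = 1 -> b1*w1+b2*w2+b3*w3 = 0 -> 0 <= w1*w1+w2*w2+w3*w3 ->
  let a1 := b1 + (b1 + lam * w1) in let a2 := b2 + (b2 + lam * w2) in
  let a3 := b3 + (b3 + lam * w3) in
  let E := a1*a1+a2*a2+a3*a3 in
  (4/E*a1 + -1*b1 - b1)^2 + (4/E*a2 + -1*b2 - b2)^2 + (4/E*a3 + -1*b3 - b3)^2
  <= lam^2 * (w1*w1+w2*w2+w3*w3).
Proof.
  intros Hb Hbw HW a1 a2 a3 E.
  assert (HEd : E = a1*a1+a2*a2+a3*a3) by reflexivity.
  set (W := w1*w1+w2*w2+w3*w3) in *.
  assert (HE : E = 4 + lam^2 * W).
  { unfold E, a1, a2, a3, W.
    replace 4 with (4*(b1*b1+b2*b2+b3*b3)) at 1 by (rewrite Hb; ring).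
    replace ((b1 + (b1 + lam * w1)) * (b1 + (b1 + lam * w1)) +
             (b2 + (b2 + lam * w2)) * (b2 + (b2 + lam * w2)) +
             (b3 + (b3 + lam * w3)) * (b3 + (b3 + lam * w3)))
    with (4*(b1*b1+b2*b2+b3*b3) + 4*lam*(b1*w1+b2*w2+b3*w3) + lam^2*(w1*w1+w2*w2+w3*w3)) by ring.
    rewrite Hbw. ring. }
  assert (Hs : 0 <= lam^2 * W) by (apply Rmult_le_pos; [apply pow2_ge_0|exact HW]).
  assert (HE0 : 0 < E) by lra.
  clearbody E.
  replace ((4/E*a1 + -1*b1 - b1)^2 + (4/E*a2 + -1*b2 - b2)^2 + (4/E*a3 + -1*b3 - b3)^2)
    with (16/(E*E) * (a1*a1+a2*a2+a3*a3) - 16/E*(a1*b1+a2*b2+a3*b3) + 4*(b1*b1+b2*b2+b3*b3))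
    by (field; lra).
  rewrite <- HEd.
  assert (Hab : a1*b1+a2*b2+a3*b3 = 2).
  { unfold a1, a2, a3.
    replace ((b1 + (b1 + lam * w1)) * b1 + (b2 + (b2 + lam * w2)) * b2 + (b3 + (b3 + lam * w3)) * b3)
      with (2*(b1*b1+b2*b2+b3*b3) + lam*(b1*w1+b2*w2+b3*w3)) by ring.
    rewrite Hb, Hbw; ring. }
  rewrite Hab, Hb.
  replace (16 / (E * E) * E - 16 / E * 2 + 4 * 1) with (4 * (lam^2*W) / E) by (rewrite HE; field; lra).
  apply (Rmult_le_reg_r E); [lra|].
  replace (4 * (lam ^ 2 * W) / E * E) with (4 * (lam^2*W)) by (field; lra).
  rewrite HE. nra.
Qed.

Lemma key_g b1 b2 b3 x lam eta eps :
  b1*b1+b2*b2+b3*b3 = 1 -> S2 x -> 0 < lam -> 0 < eta -> 0 < eps -> lam < eps*eta/4 ->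
  eta <= dist3 x (vopp (b1,b2,b3)) -> dist3 (g (b1,b2,b3) lam x) (b1,b2,b3) < eps.
Proof.
  intros Hb Hx Hl He Heps Hle Hd.
  destruct x as [[x1 x2] x3].
  apply S2_coord in Hx.
  unfold g, pi_inv. destruct vec_eq_dec as [e|n].
  { rewrite e, dist3_self in Hd. lra. }
  unfold vopp, vscal in Hd. rewrite dist3_coord in Hd.
  unfold Dil, pi, vsub, vadd, vscal, vopp, dot. cbn.
  set (D := (x1 + b1) * (x1 + b1) + (x2 + b2) * (x2 + b2) + (x3 + b3) * (x3 + b3)).
  assert (HD : (x1 - -1 * b1) ^ 2 + (x2 - -1 * b2) ^ 2 + (x3 - -1 * b3) ^ 2 = D) by (unfold D; ring).
  rewrite HD in Hd.
  assert (HD0 : 0 <= D) by (unfold D; pose proof (Rle_0_sqr (x1+b1)); pose proof (Rle_0_sqr (x2+b2)); pose proof (Rle_0_sqr (x3+b3)); unfold Rsqr in *; lra).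
  assert (HeD : eta^2 <= D).
  { rewrite <- (sqrt_sqrt D HD0). simpl. rewrite Rmult_1_r. apply Rmult_le_compat; lra. }
  assert (HDp : 0 < D) by nra.
  set (w1 := 4 / D * (x1 + b1) + -1 * b1 + -1 * b1).
  set (w2 := 4 / D * (x2 + b2) + -1 * b2 + -1 * b2).
  set (w3 := 4 / D * (x3 + b3) + -1 * b3 + -1 * b3).
  destruct (w_facts b1 b2 b3 x1 x2 x3 D w1 w2 w3 Hb Hx eq_refl HDp eq_refl eq_refl eq_refl) as [Hbw HW].
  assert (HW0 : 0 <= w1*w1+w2*w2+w3*w3) by nra.
  rewrite dist3_coord.
  eapply Rle_lt_trans; [apply sqrt_le_1_alt; apply (a_facts b1 b2 b3 w1 w2 w3 lam Hb Hbw HW0)|].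
  rewrite <- (sqrt_pow2 eps) by lra. apply sqrt_lt_1_alt. split.
  { apply Rmult_le_pos; [apply pow2_ge_0|exact HW0]. }
  rewrite HW.
  assert (H16 : 16 / D <= 16 / eta^2).
  { unfold Rdiv. apply Rmult_le_compat_l; [lra|]. apply Rinv_le_contravar; nra. }
  assert (Hlam2 : 16 * lam^2 < eps^2 * eta^2) by nra.
  assert (H16b : lam^2 * (16/eta^2) < eps^2).
  { apply (Rmult_lt_reg_r (eta^2)); [nra|].
    replace (lam ^ 2 * (16 / eta ^ 2) * eta ^ 2) with (16*lam^2) by (field; lra). lra. }
  assert (0 <= lam^2) by apply pow2_ge_0.
  nra.
Qed.

Lemma vnorm_zero : vnorm vzero = 0.
Proof. unfold vnorm, dot, vzero. cbn. replace (0*0+0*0+0*0) with 0 by ring. apply sqrt_0. Qed.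

Lemma key_f al x eta eps :
  0 < vnorm al < 1 -> 0 < eta -> 0 < eps -> 1 - vnorm al < eps*eta/4 -> S2 x ->
  eta <= dist3 x (vopp (vscal (/ vnorm al) al)) ->
  dist3 (Defs.f al x) (vscal (/ vnorm al) al) < eps.
Proof.
  intros Hn He Heps Hl Hx Hd.
  unfold Defs.f. destruct vec_eq_dec as [e|ne].
  { rewrite e, vnorm_zero in Hn. lra. }
  destruct al as [[a1 a2] a3].
  set (n := vnorm (a1,a2,a3)) in *.
  assert (Hnn : n * n = a1*a1+a2*a2+a3*a3).
  { unfold n, vnorm, dot. cbn. apply sqrt_sqrt. nra. }
  change (vscal (/ n) (a1, a2, a3)) with (/n*a1, /n*a2, /n*a3) in *.
  apply key_g with eta; try lra; auto.
  apply (Rmult_eq_reg_r (n*n)); [|nra].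
  replace ((/ n * a1 * (/ n * a1) + / n * a2 * (/ n * a2) + / n * a3 * (/ n * a3)) * (n * n))
    with (a1*a1+a2*a2+a3*a3) by (field; lra). lra.
Qed.

Lemma Pp_mono {V : Type} (C : V -> R3 -> Prop) U eta eta' :
  eta' <= eta -> Pp C U eta -> Pp C U eta'.
Proof.
  intros Hle HP p Hp. apply (HP p). intros v Hv.
  destruct (Hp v Hv) as [x [Hx Hxp]]. exists x. split; [exact Hx|lra].
Qed.

Lemma common_eta {V : Type} (C : V -> R3 -> Prop) (LL : list (list V)) :
  (forall s, In s LL -> exists eta, 0 < eta /\ Pp C (fun v => In v s) eta) ->
  exists eta, 0 < eta /\ forall s, In s LL -> Pp C (fun v => In v s) eta.
Proof.
  induction LL as [|s0 LL IH]; intros H.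
  - exists 1. split; [lra|]. intros s [].
  - destruct IH as [e1 [He1 H1]]. { intros s Hs. apply H. right. exact Hs. }
    destruct (H s0 (or_introl eq_refl)) as [e0 [He0 H0]].
    exists (Rmin e0 e1). split. { apply Rmin_pos; assumption. }
    intros s [<-|Hs].
    + apply (Pp_mono C _ e0); [apply Rmin_l|exact H0].
    + apply (Pp_mono C _ e1); [apply Rmin_r|apply H1; exact Hs].
Qed.

Fixpoint pws {A : Type} (l : list A) : list (list A) :=
  match l with
  | nil => nil :: nil
  | a :: t => pws t ++ map (cons a) (pws t)
  end.

Lemma pws_spec {A : Type} (l : list A) (U : A -> Prop) :
  exists s, In s (pws l) /\ forall v, In v s <-> (U v /\ In v l).
Proof.
  induction l as [|a t IH].
  - exists nil. split; [left; reflexivity|]. intro v; simpl; tauto.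
  - destruct IH as [s [Hs Hsv]].
    destruct (classic (U a)) as [Ha|Ha].
    + exists (a :: s). split.
      * simpl. apply in_or_app. right. apply in_map. exact Hs.
      * intro v. simpl. rewrite Hsv. split.
        -- intros [<-|[Hv Hv']]; auto.
        -- intros [Hv [<-|Hv']]; auto.
    + exists s. split.
      * simpl. apply in_or_app. left. exact Hs.
      * intro v. simpl. rewrite Hsv. split.
        -- intros [Hv Hv']; auto.
        -- intros [Hv [<-|Hv']]; [contradiction|auto].
Qed.

Theorem lemma3p8 (V : Type) (HV : Finite V) (C : V -> R3 -> Prop)
  (HC : univalent_packing C) (eps : R) (Heps : 0 < eps < 1) :
  exists delta, 0 < delta < 1 /\
    forall alpha : R3, 1 - delta < vnorm alpha < 1 ->
      in_VC C (fun v => ~ V1 C eps alpha v).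
Proof.
  destruct HC as [Hcap _].
  assert (Hsub : forall v, subset3 (C v) S2) by (intro v; apply (Hcap v)).
  assert (Hcl : forall v, closed3 (C v)) by (intro v; apply (Hcap v)).
  destruct HV as [l Hl].
  destruct (common_eta C (pws l)) as [eta [He HP]].
  { intros s _. apply stepA; assumption. }
  exists (Rmin (1/2) (eps*eta/8)). split.
  { split. apply Rmin_pos; [lra|]. apply Rmult_lt_0_compat; [|lra]. apply Rmult_lt_0_compat; lra.
    pose proof (Rmin_l (1/2) (eps*eta/8)). lra. }
  intros al [H1 H2].
  pose proof (Rmin_l (1/2) (eps*eta/8)). pose proof (Rmin_r (1/2) (eps*eta/8)).
  destruct (pws_spec l (fun v => ~ V1 C eps al v)) as [s [Hs Hsv]].
  destruct (HP s Hs (vopp (vscal (/ vnorm al) al))) as [x [Sx Hx]].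
  - intros v Hv. apply Hsv in Hv. destruct Hv as [Hv _]. unfold V1 in Hv.
    apply not_all_ex_not in Hv. destruct Hv as [x Hv]. apply imply_to_and in Hv.
    destruct Hv as [Cx Hb]. exists x. split; [exact Cx|].
    apply Rnot_le_lt. intro Hge. apply Hb. unfold ball3.
    apply key_f with eta; try lra; auto.
    apply (Hsub v); exact Cx.
  - exists x. split; [exact Sx|]. intros v Hv. apply Hx. apply Hsv. split; [exact Hv|apply Hl].
Qed.
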